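(* Let $\mathcal{X}$ and $\mathcal{Y}$ be finite sets, let $\mathcal{M}\subseteq\mathcal{X}\times\mathcal{Y}$ be the set of actual matches, and let $\hat{\mathcal{M}}_H\subseteq\mathcal{X}\times\mathcal{Y}$ be a fixed set (the matches identified by a holdout query algorithm, chosen independently of the validation sample). For $x\in\mathcal{X}$ let $\mathcal{M}(x)$ and $\hat{\mathcal{M}}_H(x)$ be the sets of pairs in $\mathcal{M}$, respectively $\hat{\mathcal{M}}_H$, whose first coordinate is $x$. Let $\hat{\mathcal{X}}_H=\{x\in\mathcal{X}:\hat{\mathcal{M}}_H(x)\ne\emptyset\}$ and $\mathcal{X}'=\{x\in\mathcal{X}:\mathcal{M}(x)\neq\emptyset\}$; define $p_H(x)=|\hat{\mathcal{M}}_H(x)\cap\mathcal{M}(x)|/|\hat{\mathcal{M}}_H(x)|$ for $x\in\hat{\mathcal{X}}_H$ and $r_H(x)=|\hat{\mathcal{M}}_H(x)\cap\mathcal{M}(x)|/|\mathcal{M}(x)|$ for $x\in\mathcal{X}'$, and the query precision and recall $P_H=\frac{1}{|\hat{\mathcal{X}}_H|}\sum_{x\in\hat{\mathcal{X}}_H}p_H(x)$, $R_H=\frac{1}{|\mathcal{X}'|}\sum_{x\in\mathcal{X}'}r_H(x)$. Let $\mathcal{S}_{\mathcal{X}}$ be a sample drawn uniformly at random without replacement from $\mathcal{X}$. Then for any $\delta>0$, with probability at least $1-\delta$, $$P_H\ \ge\ p^-(\hat{\mathcal{X}}_H,\mathcal{S}_{\mathcal{X}}\cap\hat{\mathcal{X}}_H,p_H,0,1,\delta),$$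 and, with probability at least $1-\delta$, $$R_H\ \ge\ p^-(\mathcal{X}',\mathcal{S}_{\mathcal{X}}\cap\mathcal{X}',r_H,0,1,\delta).$$
   Context: PAC bound rules: $p^+$ and $p^-$ are functions which, given a finite set $\mathcal{P}$ (population), a subset $\mathcal{S}\subseteq\mathcal{P}$, a function $f:\mathcal{P}\to\mathbb{R}$, reals $a\le b$ and $\delta>0$, return a real number, and satisfy the following: for every finite set $\mathcal{P}$ with $|\mathcal{P}|=n$, every sample size $s$, and every $f$ with $a\le f(x)\le b$ for all $x\in\mathcal{P}$, if $\mathcal{S}$ is a size-$s$ sample drawn uniformly at random without replacement from $\mathcal{P}$ and $\mu=\frac1n\sum_{x\in\mathcal{P}}f(x)$, then $\Pr\{\mu>p^+(\mathcal{P},\mathcal{S},f,a,b,\delta)\}\le\delta$ and $\Pr\{\mu<p^-(\mathcal{P},\mathcal{S},f,a,b,\delta)\}\le\delta$. *)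

(* Defs.v *)
From mathcomp Require Import all_boot all_order all_algebra.
Set Implicit Arguments. Unset Strict Implicit. Unset Printing Implicit Defensive.
Import Order.TTheory GRing.Theory Num.Theory.
Local Open Scope ring_scope.

(* Probability that a size-s sample S, drawn uniformly at random without
   replacement from the finite population P (i.e. uniformly among the
   s-element subsets of P), satisfies the event E. *)
Definition prob_sample (R : realFieldType) (T : finType) (P : {set T}) (s : nat)
  (E : {set T} -> bool) : R :=
  (#|[set S : {set T} | [&& S \subset P, #|S| == s & E S]]|%:R)
    / ('C(#|P|, s))%:R.

Definition mean (R : realFieldType) (T : finType) (P : {set T}) (f : T -> R) : R :=
  (#|P|%:R)^-1 * \sum_(x in P) f x.

(* a bound rule: (P, S, f, a, b, delta) |-> real; populations are finite sets
   (subsets of an arbitrary finite type) *)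
Definition bound_rule (R : realFieldType) :=
  forall T : finType, {set T} -> {set T} -> (T -> R) -> R -> R -> R -> R.

Definition pac_upper (R : realFieldType) (pp : bound_rule R) : Prop :=
  forall (T : finType) (P : {set T}) (s : nat) (f : T -> R) (a b delta : R),
    a <= b -> 0 < delta -> (s <= #|P|)%N ->
    (forall x, x \in P -> a <= f x <= b) ->
    prob_sample R P s (fun S => pp T P S f a b delta < mean P f) <= delta.

Definition pac_lower (R : realFieldType) (pm : bound_rule R) : Prop :=
  forall (T : finType) (P : {set T}) (s : nat) (f : T -> R) (a b delta : R),
    a <= b -> 0 < delta -> (s <= #|P|)%N ->
    (forall x, x \in P -> a <= f x <= b) ->
    prob_sample R P s (fun S => mean P f < pm T P S f a b delta) <= delta.

Definition pac_bound_rules (R : realFieldType) (pp pm : bound_rule R) : Prop :=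
  pac_upper pp /\ pac_lower pm.

Definition row_of (X Y : finType) (M : {set X * Y}) (x : X) : {set X * Y} :=
  [set e in M | e.1 == x].

Definition match_dom (X Y : finType) (M : {set X * Y}) : {set X} :=
  [set x | row_of M x != set0].

Definition prec_x (R : realFieldType) (X Y : finType) (M MH : {set X * Y}) (x : X) : R :=
  (#|row_of MH x :&: row_of M x|%:R) / (#|row_of MH x|%:R).

Definition rec_x (R : realFieldType) (X Y : finType) (M MH : {set X * Y}) (x : X) : R :=
  (#|row_of MH x :&: row_of M x|%:R) / (#|row_of M x|%:R).

Definition query_precision (R : realFieldType) (X Y : finType) (M MH : {set X * Y}) : R :=
  mean (match_dom MH) (prec_x R M MH).
Definition query_recall (R : realFieldType) (X Y : finType) (M MH : {set X * Y}) : R :=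
  mean (match_dom M) (rec_x R M MH).
Arguments prob_sample R [T] P s E.
Arguments mean [R T] P f.

(* Main.v *)
Require Import Defs.
From mathcomp Require Import all_boot all_order all_algebra.
Import Order.TTheory GRing.Theory Num.Theory.

Lemma split_by_k (T : finType) (P : {set T}) (s : nat) (E : {set T} -> bool) :
  #|[set S : {set T} | [&& S \subset [set: T], #|S| == s & E (S :&: P)]]| =
  \sum_(k < s.+1) #|[set S : {set T} | [&& #|S| == s, E (S :&: P) & #|S :&: P| == k]]|.
Proof.
rewrite -sum1_card.
rewrite (eq_bigr (fun S => \sum_(k < s.+1) nat_of_bool (#|S :&: P| == k))); last first.
  move=> S; rewrite inE => /and3P [_ /eqP hs _].
  have hx : (#|S :&: P| < s.+1)%N by rewrite ltnS -hs subset_leq_card // subsetIl.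
  rewrite (bigD1 (Ordinal hx)) //= eqxx big1 // => k /negbTE hk.
  case: eqP => // e; move: hk; rewrite -val_eqE /= e eqxx //.
rewrite exchange_big /=; apply: eq_bigr => k _.
rewrite -big_mkcondr /= sum1_card; apply: eq_card => S; by rewrite unfold_in !inE subsetT /= andbA.
Qed.

Lemma card_k (T : finType) (P : {set T}) (s : nat) (E : {set T} -> bool) (k : 'I_s.+1) :
  #|[set S : {set T} | [&& #|S| == s, E (S :&: P) & #|S :&: P| == k]]| =
  #|[set A : {set T} | [&& A \subset P, #|A| == k & E A]]| * 'C(#|~: P|, s - k).
Proof.
case: k => k /=; rewrite ltnS => hks.
rewrite -cards_draws -cardsX.
set Ak := [set A : {set T} | [&& A \subset P, #|A| == k & E A]].
set Bk := [set B : {set T} | B \subset ~: P & #|B| == s - k].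
have -> : [set S : {set T} | [&& #|S| == s, E (S :&: P) & #|S :&: P| == k]] =
   [set p.1 :|: p.2 | p in setX Ak Bk].
  apply/setP => S; rewrite inE; apply/idP/imsetP.
  - move=> /and3P [/eqP hs hE /eqP hk]; exists (S :&: P, S :&: ~: P).
      rewrite !inE /= subsetIr hk hE eqxx /=.
      have h2 : #|S :&: ~: P| = (s - k)%N.
        by rewrite -hs -hk -(cardsID P S) setDE addKn.
      by rewrite h2 subsetIr eqxx.
    by rewrite /= -setIUr setUCr setIT.
  - case=> [[A B]]; rewrite !inE /= => /andP [/and3P [hA /eqP hkA hE] /andP [hB /eqP hkB]] ->.
    have hAP : A :&: P = A by apply/setIidPl.
    have hBP : B :&: P = set0.
      apply/setP => x; rewrite !inE; apply/negbTE; apply/negP => /andP [xB xP].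
      by move/subsetP: hB => /(_ x xB); rewrite inE xP.
    have hAB : A :&: B = set0.
      apply/setP => x; rewrite !inE; apply/negbTE; apply/negP => /andP [xA xB].
      move/subsetP: hB => /(_ x xB); rewrite inE; move/subsetP: hA => /(_ x xA) ->.
      done.
    rewrite setIUl hAP hBP setU0 hE hkA eqxx andbT andbT cardsU hAB cards0 subn0 hkA hkB.
    by rewrite subnKC.
apply: card_in_imset => [[A B] [A' B']]; rewrite !inE /= =>
  /andP [/and3P [hA _ _] /andP [hB _]] /andP [/and3P [hA' _ _] /andP [hB' _]] e.
have key : forall A B : {set T}, A \subset P -> B \subset ~: P ->
   (A :|: B) :&: P = A /\ (A :|: B) :&: ~: P = B.
  move=> A0 B0 h0 h1; split; apply/setP => x; rewrite !inE;
  have hA0 := subsetP h0 x; have hB0 := subsetP h1 x; rewrite inE in hB0;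
  case xP: (x \in P) in hA0 hB0 *; case xA: (x \in A0) in hA0 *;
  case xB: (x \in B0) in hB0 *; by [|move: (hA0 isT)|move: (hB0 isT)].
have [e1 e2] := key A B hA hB; have [e1' e2'] := key A' B' hA' hB'.
by congr (_, _); [rewrite -e1 e e1' | rewrite -e2 e e2'].
Qed.

Local Open Scope ring_scope.

Lemma key (R : realFieldType) (T : finType) (P : {set T}) (s : nat) (delta : R)
  (E G : {set T} -> bool) :
  (s <= #|T|)%N -> (forall A, G A = ~~ E A) ->
  (forall k, (k <= #|P|)%N -> prob_sample R P k E <= delta) ->
  1 - delta <= prob_sample R [set: T] s (fun S => G (S :&: P)).
Proof.
move=> hs hG hk; rewrite /prob_sample cardsT.
set N := 'C(#|T|, s).
have Npos : 0 < N%:R :> R by rewrite ltr0n bin_gt0.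
set good := #|[set S : {set T} | [&& S \subset [set: T], #|S| == s & G (S :&: P)]]|.
set bad := #|[set S : {set T} | [&& S \subset [set: T], #|S| == s & E (S :&: P)]]|.
have hsplit : (bad + good)%N = N.
  rewrite /N -cardsT -(cards_draws [set: T] s).
  rewrite -(cardsID [set S : {set T} | E (S :&: P)] [set S : {set T} | S \subset [set: T] & #|S| == s]).
  congr (_ + _)%N; apply: eq_card => S; rewrite !inE ?hG;
    by case: (E (S :&: P)); rewrite ?andbT ?andbF.
have hN : N = #|[set S : {set T} | [&& S \subset [set: T], #|S| == s & (fun _ => true) (S :&: P)]]|.
  rewrite /N -cardsT -(cards_draws [set: T] s); apply: eq_card => S; rewrite !inE.
  by rewrite andbT.
have hbad : bad%:R <= delta * N%:R.
  rewrite hN /bad (@split_by_k T P s (fun _ => true)) split_by_k !natr_sum mulr_sumr; apply: ler_sum => k _.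
  rewrite (@card_k T P s (fun _ => true)) card_k !natrM mulrA; apply: ler_wpM2r; first exact: ler0n.
  have -> : #|[set A : {set T} | [&& A \subset P, #|A| == k & true]]| = 'C(#|P|, k).
    rewrite -cards_draws; apply: eq_card => A; rewrite !inE; by rewrite andbT.
  have hle : (#|[set A : {set T} | [&& A \subset P, #|A| == k & E A]]| <= 'C(#|P|, k))%N.
    rewrite -cards_draws; apply: subset_leq_card; apply/subsetP => A; rewrite !inE.
    by case/and3P => -> ->.
  case: (leqP k #|P|) => hkP.
    have hC : (0 : R) < 'C(#|P|, k)%:R by rewrite ltr0n bin_gt0.
    by have := hk k hkP; rewrite /prob_sample ler_pdivrMr.
  rewrite bin_small // in hle *; move: hle; rewrite leqn0 => /eqP ->.
  by rewrite mulr0.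
have -> : good%:R = N%:R - bad%:R :> R by rewrite -hsplit natrD addrC addKr.
rewrite ler_pdivlMr // mulrBl mul1r lerD2l lerN2 mulrC; by rewrite mulrC.
Qed.

Lemma ratio01 (R : realFieldType) (a b : nat) : (a <= b)%N ->
  (0 : R) <= a%:R / b%:R <= (1 : R).
Proof.
move=> hab; apply/andP; split; first by rewrite divr_ge0 ?ler0n.
case: b hab => [|b] hab; first by rewrite invr0 mulr0.
by rewrite ler_pdivrMr ?ltr0n // mul1r ler_nat.
Qed.

Theorem theorem4 (R : realFieldType) (pp pm : bound_rule R)
  (X Y : finType) (M MH : {set X * Y}) (s : nat) (delta : R) :
  pac_bound_rules pp pm ->
  (s <= #|X|)%N -> 0 < delta ->
  1 - delta <= prob_sample R [set: X] s (fun S =>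
      pm X (match_dom MH) (S :&: match_dom MH) (prec_x R M MH) 0 1 delta
        <= query_precision R M MH)
  /\
  1 - delta <= prob_sample R [set: X] s (fun S =>
      pm X (match_dom M) (S :&: match_dom M) (rec_x R M MH) 0 1 delta
        <= query_recall R M MH).
Proof.
move=> [_ hlow] hs hd; split.
- apply: (@key R X (match_dom MH) s delta (fun A => mean (match_dom MH) (prec_x R M MH) <
      pm X (match_dom MH) A (prec_x R M MH) 0 1 delta)
      (fun A => pm X (match_dom MH) A (prec_x R M MH) 0 1 delta <= query_precision R M MH)) => //.
    by move=> A; rewrite leNgt.
  move=> k hk; apply: hlow => //.
  move=> x _; apply: ratio01; apply: subset_leq_card; exact: subsetIl.
- apply: (@key R X (match_dom M) s delta (fun A => mean (match_dom M) (rec_x R M MH) <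
      pm X (match_dom M) A (rec_x R M MH) 0 1 delta)
      (fun A => pm X (match_dom M) A (rec_x R M MH) 0 1 delta <= query_recall R M MH)) => //.
    by move=> A; rewrite leNgt.
  move=> k hk; apply: hlow => //.
  move=> x _; apply: ratio01; apply: subset_leq_card; exact: subsetIr.
Qed.
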